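(* Let $G$ be a graph and let $\mathcal R=\{G_v: v\in V(G)\}$ be a family of pairwise vertex-disjoint graphs. Then $$\gamma_{gr}(G\hookleftarrow \mathcal R)=\max \left\{\gamma_{gr}(G,I)+\sum_{v\in I} \gamma_{gr}(G_v)-|I| \;:\; I \text{ is an independent set of } G\right\}.$$
   Context: All graphs are finite and simple; $N[v]$ denotes the closed neighborhood. The $X$-join product $G\hookleftarrow \mathcal R$ has vertex set $\bigcup_{v\in V(G)}V(G_v)$, the edges of all $G_v$, and all edges between $V(G_u)$ and $V(G_v)$ whenever $uv\in E(G)$. For a sequence $S=(v_1,\dots,v_k)$ of distinct vertices, $\widehat S=\{v_1,\dots,v_k\}$, $|S|=k$, and $PN_S(v_i)=N[v_i]\setminus\bigcup_{j<i}N[v_j]$. $S$ is a legal dominating sequence of $G$ if $\widehat S$ is a dominating set and $PN_S(v_i)\neq\emptyset$ for all $i$; $\mathcal L(G)$ is the set of these. $\gamma_{gr}(G)$ (Grundy domination number) is the maximum length of a legal dominating sequence. For $S\in\mathcal L(G)$, the footprinter $f_S(x)$ of $x$ is the unique $v\in\widehat S$ with $x\in PN_S(v)$, and $I_S=\{v: f_S(v)=v\}$. For an independent set $I$, $\mathcal L(G,I)=\{S\in\mathcal L(G): I_S=I\}$ and $\gamma_{gr}(G,I)=\max\{|S|:S\in\mathcal L(G,I)\}$, where the maximum of the empty set is $-\infty$. *)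

(* Defs.v *)
(* Graphs: symmetric irreflexive relations on finTypes. *)
From mathcomp Require Import all_boot all_order all_algebra.
Set Implicit Arguments. Unset Strict Implicit. Unset Printing Implicit Defensive.

Section Grundy.
Variables (T : finType) (e : rel T).

Definition cnbhd (v : T) : {set T} := [set u | (u == v) || e v u].

Definition pnS (s : seq T) (v : T) : {set T} :=
  cnbhd v :\: \bigcup_(u <- take (index v s) s) cnbhd u.

Definition dominating (D : pred T) : bool :=
  [forall x, [exists v, (v \in D) && (x \in cnbhd v)]].

Definition legal (s : seq T) : bool :=
  [&& uniq s, dominating (mem s) & all (fun v => pnS s v != set0) s].

(* I_S = { v : f_S(v) = v } = { v in S : v \in PN_S(v) } *)
Definition IS (s : seq T) : {set T} := [set v | (v \in s) && (v \in pnS s v)].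

Definition independent (I : {set T}) : bool :=
  [forall x in I, forall y in I, ~~ e x y].

(* Grundy domination number (legal sequences are uniq, so length <= #|T|) *)
Definition gamma_gr : nat :=
  \max_(n < #|T|.+1 | [exists t : n.-tuple T, legal t]) n.

Definition LI_nonempty (I : {set T}) : bool :=
  [exists n : 'I_#|T|.+1, [exists t : n.-tuple T, legal t && (IS t == I)]].

(* gamma_gr(G,I), meaningful when LI_nonempty I (otherwise -oo) *)
Definition gamma_grI (I : {set T}) : nat :=
  \max_(n < #|T|.+1 | [exists t : n.-tuple T, legal t && (IS t == I)]) n.

End Grundy.

(* X-join product: vertex set is the disjoint union {v : T & Tv v} *)
Definition join_rel (T : finType) (e : rel T) (Tv : T -> finType)
  (ev : forall v, rel (Tv v)) : rel {v : T & Tv v} :=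
  fun a b => if tag a == tag b then ev (tag a) (tagged a) (tagged_as a b)
             else e (tag a) (tag b).

(* Main.v *)
Require Import Defs.
From mathcomp Require Import all_boot all_order all_algebra.
From mathcomp Require Import zify.
Set Implicit Arguments. Unset Strict Implicit. Unset Printing Implicit Defensive.

Section Gen.
Variables (T : finType) (e : rel T).
Hypotheses (Hsym : symmetric e) (eirr : irreflexive e).

Definition dom (s : seq T) : {set T} := \bigcup_(u <- s) cnbhd e u.

Fixpoint nd (D : {set T}) (s : seq T) : bool :=
  match s with
  | [::] => true
  | v :: q => (cnbhd e v :\: D != set0) && nd (D :|: cnbhd e v) q
  end.

Lemma in_cnbhd u v : (u \in cnbhd e v) = (u == v) || e v u.
Proof. by rewrite inE. Qed.

Lemma cnbhd_refl v : v \in cnbhd e v.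
Proof. by rewrite in_cnbhd eqxx. Qed.

Lemma cnbhd_sym u v : (u \in cnbhd e v) = (v \in cnbhd e u).
Proof. by rewrite !in_cnbhd eq_sym Hsym. Qed.

Lemma mem_dom z s : (z \in dom s) = has (fun u => z \in cnbhd e u) s.
Proof.
rewrite /dom; elim: s => [|u s IH]; first by rewrite big_nil inE.
by rewrite big_cons inE IH.
Qed.

Lemma dom_cat s t : dom (s ++ t) = dom s :|: dom t.
Proof. by rewrite /dom big_cat. Qed.

Lemma dom1 u : dom [:: u] = cnbhd e u.
Proof. by rewrite /dom big_cons big_nil setU0. Qed.

Lemma dom0 : dom [::] = set0.
Proof. by rewrite /dom big_nil. Qed.

Lemma nd_cat D s t : nd D (s ++ t) = nd D s && nd (D :|: dom s) t.
Proof.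
elim: s D => [|v s IH] D /=; first by rewrite dom0 setU0.
by rewrite IH -andbA -setUA -dom1 -dom_cat.
Qed.

Lemma nd_notsub D s x : nd D s -> x \in s -> ~~ (cnbhd e x \subset D).
Proof.
elim: s D => [|v s IH] D //= /andP[ne nds]; rewrite inE => /orP[/eqP->|xs].
  by rewrite setD_eq0 in ne.
apply: contra (IH _ nds xs) => sub; exact: (subset_trans sub (subsetUl _ _)).
Qed.

Lemma nd_uniq D s : nd D s -> uniq s.
Proof.
elim: s D => [|v s IH] D //= /andP[ne nds]; rewrite (IH _ nds) andbT.
apply/negP => vs; have := nd_notsub nds vs; by rewrite subsetUr.
Qed.

Lemma take_index_mid (p q : seq T) x :
  uniq (p ++ x :: q) -> take (index x (p ++ x :: q)) (p ++ x :: q) = p.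
Proof.
rewrite cat_uniq /= => /and3P[_ /norP[xp _] _].
by rewrite index_cat (negbTE xp) /= eqxx addn0 take_size_cat.
Qed.

Lemma pnSE s x : pnS e s x = cnbhd e x :\: dom (take (index x s) s).
Proof. by []. Qed.

Lemma pn_nd p s : uniq (p ++ s) ->
  all (fun v => pnS e (p ++ s) v != set0) s = nd (dom p) s.
Proof.
elim: s p => [|v s IH] p //= U.
have U' : uniq ((p ++ [:: v]) ++ s) by rewrite -catA.
rewrite pnSE take_index_mid // -dom1 -dom_cat -(IH _ U') -catA.
by [].
Qed.

Lemma dominatingP s : reflect (forall x, x \in dom s) (dominating e (mem s)).
Proof.
apply: (iffP forallP) => H x.
  by case/existsP: (H x) => v /andP[vs xv]; rewrite mem_dom; apply/hasP; exists v.
by have := H x; rewrite mem_dom => /hasP[v vs xv]; apply/existsP; exists v; rewrite vs.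
Qed.

Lemma legal_nd s : legal e s = nd set0 s && dominating e (mem s).
Proof.
rewrite /legal; case: (boolP (uniq s)) => U /=.
  by have := pn_nd (p:=[::]) U; rewrite /= dom0 => ->; rewrite andbC.
by apply/esym/negbTE; apply: contra U => /andP[/nd_uniq].
Qed.

Lemma IS_sub s : IS e s \subset [set x | x \in s].
Proof. by apply/subsetP => v; rewrite !inE => /andP[]. Qed.

Lemma in_IS s v : (v \in IS e s) = (v \in s) && (v \notin dom (take (index v s) s)).
Proof. rewrite /IS in_set pnSE in_setD cnbhd_refl andbT. by []. Qed.

Lemma IS_mono s t : IS e s \subset IS e (s ++ t).
Proof.
apply/subsetP => v; rewrite !in_IS mem_cat => /andP[vs].
rewrite vs /= index_cat vs takel_cat //.
by apply: ltnW; rewrite index_mem.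
Qed.

Lemma IS_indep s : legal e s -> independent e (IS e s).
Proof.
move=> /andP[U _].
have key x y : x \in IS e s -> y \in IS e s -> index x s < index y s -> ~~ e x y.
  rewrite !in_IS => /andP[xs _] /andP[ys ny] lt; apply: contra ny => exy.
  rewrite mem_dom; apply/hasP; exists x; first by rewrite in_take.
  by rewrite in_cnbhd exy orbT.
apply/forallP => x; apply/implyP => xI; apply/forallP => y; apply/implyP => yI.
have := xI; rewrite in_IS => /andP[xs _]; have := yI; rewrite in_IS => /andP[ys _].
case: (ltngtP (index x s) (index y s)) => [lt|gt|Eq]; first exact: key.
  by rewrite Hsym; apply: key.
by rewrite (index_inj x xs ys Eq) eirr.
Qed.

Lemma size_le_card (s : seq T) : uniq s -> size s <= #|T|.
Proof. by move=> U; rewrite -(card_uniqP U); apply: max_card. Qed.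

Lemma sum_sub (w : T -> nat) (A B : {set T}) :
  A \subset B -> \sum_(v in A) w v <= \sum_(v in B) w v.
Proof.
move=> sub; rewrite [X in X <= _]big_mkcond [X in _ <= X]big_mkcond.
by apply: leq_sum => v _; case: ifP => // /(subsetP sub) ->.
Qed.

Lemma ext_step (s : seq T) : nd set0 s -> ~~ dominating e (mem s) ->
  exists s1, [/\ nd set0 s1, size s1 = (size s).+1 & IS e s \subset IS e s1].
Proof.
move=> nds /dominatingP ndm.
case: (pickP (fun x => x \notin dom s)) => [x xn|H]; last first.
  by exfalso; apply: ndm => x; have := H x => /negbFE.
exists (s ++ [:: x]); split; last exact: IS_mono.
  rewrite nd_cat nds /= andbT; apply/set0Pn; exists x.
  by rewrite in_setD cnbhd_refl in_setU in_set0 (negbTE xn).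
by rewrite size_cat addn1.
Qed.

Lemma ext (w : T -> nat) (s : seq T) : nd set0 s -> exists s2, legal e s2 /\
  size s + \sum_(v in IS e s) w v <= size s2 + \sum_(v in IS e s2) w v.
Proof.
move=> nds; move: {2}(#|T| - size s) (leqnn (#|T| - size s)) => n.
elim: n s nds => [|n IH] s nds Hn;
  (case: (boolP (dominating e (mem s))) => [dm|ndm];
    first by exists s; rewrite legal_nd nds dm).
  case: (ext_step nds ndm) => s1 [nd1 sz1 _].
  have := size_le_card (nd_uniq nd1); rewrite sz1 => H; exfalso; lia.
case: (ext_step nds ndm) => s1 [nd1 sz1 sub].
have Hn1 : #|T| - size s1 <= n.
  have := size_le_card (nd_uniq nd1); rewrite sz1 => H; lia.
case: (IH s1 nd1 Hn1) => s2 [L2 le2]; exists s2; split => //.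
apply: leq_trans le2; apply: leq_add; first by rewrite sz1.
exact: sum_sub.
Qed.

Lemma legal_le_gamma (s : seq T) : legal e s -> size s <= gamma_gr e.
Proof.
move=> L; have U : uniq s by case/and3P: L.
have H : size s < #|T|.+1 by rewrite ltnS size_le_card.
rewrite /gamma_gr; apply: (@leq_bigmax_cond _ _ _ (Ordinal H)) => /=.
by apply/existsP; exists (in_tuple s).
Qed.

Lemma gamma_attained : exists s, legal e s /\ size s = gamma_gr e.
Proof.
have [s [L _]] := ext (fun _ => 0) (s:=[::]) isT.
have U : uniq s by case/and3P: L.
have H : size s < #|T|.+1 by rewrite ltnS size_le_card.
have P0 : [exists t : (Ordinal H).-tuple T, legal e t].
  by apply/existsP; exists (in_tuple s).
rewrite /gamma_gr (bigmax_eq_arg (Ordinal H)) //.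
case: arg_maxnP => // i /existsP[t Lt] _.
by exists t; rewrite size_tuple.
Qed.

Lemma gamma_pos : 0 < #|T| -> 0 < gamma_gr e.
Proof.
case/card_gt0P => x _; have [s [L <-]] := gamma_attained.
case: s L => // /and3P[_ /dominatingP H _].
by have := H x; rewrite dom0 inE.
Qed.

Lemma legalI_le (s : seq T) : legal e s -> size s <= gamma_grI e (IS e s).
Proof.
move=> L; have U : uniq s by case/and3P: L.
have H : size s < #|T|.+1 by rewrite ltnS size_le_card.
rewrite /gamma_grI; apply: (@leq_bigmax_cond _ _ _ (Ordinal H)) => /=.
by apply/existsP; exists (in_tuple s); rewrite L eqxx.
Qed.

Lemma LI_of (s : seq T) : legal e s -> LI_nonempty e (IS e s).
Proof.
move=> L; have U : uniq s by case/and3P: L.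
have H : size s < #|T|.+1 by rewrite ltnS size_le_card.
apply/existsP; exists (Ordinal H).
by apply/existsP; exists (in_tuple s); rewrite L eqxx.
Qed.

Lemma gammaI_attained (I : {set T}) : LI_nonempty e I ->
  exists s, [/\ legal e s, IS e s = I & size s = gamma_grI e I].
Proof.
case/existsP => n0 P0; rewrite /gamma_grI (bigmax_eq_arg n0) //.
case: arg_maxnP => // i /existsP[t /andP[Lt /eqP It]] _.
by exists t; rewrite size_tuple.
Qed.

End Gen.

Section Join.
Variables (T : finType) (e : rel T) (Tv : T -> finType) (ev : forall v, rel (Tv v)).
Hypotheses (Hsym : symmetric e) (eirr : irreflexive e).
Variable d : forall v, Tv v.
Local Notation K := {v : T & Tv v}.
Local Notation eH := (join_rel e ev).
Local Notation NH := (cnbhd eH).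

Lemma NH_tag (x z : K) : z \in NH x -> tag z \in cnbhd e (tag x).
Proof.
rewrite !in_cnbhd /join_rel => /orP[/eqP->|]; first by rewrite eqxx.
by case: (tag x =P tag z) => [E _| _ H]; [rewrite E eqxx | rewrite H orbT].
Qed.

Lemma NH_adj (x z : K) : e (tag x) (tag z) -> z \in NH x.
Proof.
move=> E; rewrite in_cnbhd /join_rel.
have ne : tag x != tag z by apply: contraTneq E => ->; rewrite eirr.
by rewrite (negbTE ne) E orbT.
Qed.

Lemma NH_same (v : T) (a b : Tv v) :
  (Tagged Tv b \in NH (Tagged Tv a)) = (b \in cnbhd (@ev v) a).
Proof. by rewrite !in_cnbhd /join_rel /= eqxx tagged_asE eq_Tagged. Qed.

Section Lower.
Variables (I : {set T}) (sig : forall v, seq (Tv v)).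

Definition blk v : seq K :=
  if v \in I then [seq Tagged Tv y | y <- sig v] else [:: Tagged Tv (d v)].

Lemma blk_tag v x : x \in blk v -> tag x = v.
Proof.
rewrite /blk; case: ifP => _; first by case/mapP => y _ ->.
by rewrite inE => /eqP->.
Qed.

Lemma flat_tag p x : x \in flatten (map blk p) -> tag x \in p.
Proof. by case/flattenP => s /mapP[u up ->] /blk_tag ->. Qed.

Lemma domH_flat p z : z \in dom eH (flatten (map blk p)) ->
  exists2 u, u \in p & tag z \in cnbhd e u.
Proof.
rewrite mem_dom => /hasP[x xin zx]; exists (tag x); first exact: flat_tag.
exact: NH_tag.
Qed.

Lemma nd_tagged (v : T) (s : seq (Tv v)) (D : {set K}) :
  nd (@ev v) [set y | Tagged Tv y \in D] s -> nd eH D [seq Tagged Tv y | y <- s].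
Proof.
elim: s D => [|y s IH] D //= /andP[ne ndr]; apply/andP; split.
  case/set0Pn: ne => y'; rewrite in_setD inE => /andP[yn ny'].
  by apply/set0Pn; exists (Tagged Tv y'); rewrite in_setD NH_same ny' andbT.
apply: IH; move: ndr; congr (nd _ _ _).
by apply/setP => z; rewrite [RHS]in_set !in_setU NH_same [z \in [set _ | _]]in_set.
Qed.

Lemma blk_ex u : (forall v, legal (@ev v) (sig v)) -> exists2 x, x \in blk u & tag x = u.
Proof.
move=> Lsig; rewrite /blk; case: ifP => _; last by exists (Tagged Tv (d u)); rewrite ?inE.
case E: (sig u) => [|y s].
  have := Lsig u; rewrite E => /and3P[_ /dominatingP H _].
  by have := H (d u); rewrite dom0 inE.
by exists (Tagged Tv y) => //=; rewrite inE eqxx.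
Qed.

Lemma mem_flat p u x : u \in p -> x \in blk u -> x \in flatten (map blk p).
Proof. by move=> up xb; apply/flattenP; exists (blk u); rewrite ?map_f. Qed.

Variable S : seq T.
Hypotheses (LS : legal e S) (IE : I = IS e S) (Lsig : forall v, legal (@ev v) (sig v)).

Lemma lower_nd : nd eH set0 (flatten (map blk S)).
Proof.
have U : uniq S by case/and3P: LS.
have gen : forall s p, p ++ s = S ->
    nd eH (dom eH (flatten (map blk p))) (flatten (map blk s)).
  elim => [|v s IH] p E //=; rewrite nd_cat; apply/andP; split; last first.
    have := IH (p ++ [:: v]); rewrite -catA => /(_ E).
    by rewrite map_cat flatten_cat dom_cat /= cats0.
  have U' : uniq (p ++ v :: s) by rewrite E.
  have vnp : v \in IS e S = (v \notin dom e p).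
    by rewrite in_IS -E take_index_mid // mem_cat inE eqxx orbT.
  rewrite [blk v]/blk; case: ifP => vI; rewrite IE in vI.
    apply: nd_tagged.
    have -> : [set y : Tv v | Tagged Tv y \in dom eH (flatten (map blk p))] = set0.
      apply/setP => y; rewrite inE in_set0; apply/negbTE/negP => /domH_flat[u up] /= vu.
      by move: vI; rewrite vnp mem_dom => /hasPn/(_ u up); rewrite vu.
    by have := Lsig v; rewrite legal_nd => /andP[].
  have := LS; case/and3P => _ _ /allP /(_ v).
  rewrite -E mem_cat inE eqxx orbT pnSE take_index_mid // => /(_ isT).
  case/set0Pn => w; rewrite in_setD => /andP[wn wv].
  have wnv : w != v.
    apply: contraFneq vI => Ew; rewrite vnp -Ew //.
  have evw : e v w by move: wv; rewrite in_cnbhd (negbTE wnv).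
  rewrite /= andbT; apply/set0Pn; exists (Tagged Tv (d w)).
  rewrite in_setD NH_adj // andbT; apply/negP => /domH_flat[u up] /= wu.
  by move: wn; rewrite mem_dom => /negP; apply; apply/hasP; exists u.
by have := gen S [::] erefl; rewrite /= dom0.
Qed.

Lemma lower_dom : dominating eH (mem (flatten (map blk S))).
Proof.
have U : uniq S by case/and3P: LS.
apply/dominatingP => -[w y]; rewrite mem_dom.
have := LS; case/and3P => _ /dominatingP /(_ w) + _; rewrite mem_dom => /hasP[v vS wv].
case: (eqVneq w v) => [Ew|nwv]; last first.
  have evw : e v w by move: wv; rewrite in_cnbhd (negbTE nwv).
  have [x xb xt] := blk_ex v Lsig.
  apply/hasP; exists x; first exact: mem_flat xb.
  by apply: NH_adj; rewrite xt.
subst w; case vI: (v \in I).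
  have := Lsig v; case/and3P => _ /dominatingP /(_ y) + _.
  rewrite mem_dom => /hasP[x xs yx].
  apply/hasP; exists (Tagged Tv x); last by rewrite NH_same.
  by apply: (mem_flat vS); rewrite /blk vI map_f.
move: vI; rewrite IE in_IS vS /= => /negbFE; rewrite mem_dom => /hasP[u ut vu].
have ulv : index u S < index v S by rewrite -in_take // (mem_take ut).
have unv : u != v by apply: contraTneq ulv => ->; rewrite ltnn.
have euv : e u v by move: vu; rewrite in_cnbhd eq_sym (negbTE unv).
have [x xb xt] := blk_ex u Lsig.
apply/hasP; exists x; first exact: mem_flat (mem_take ut) xb.
by apply: NH_adj; rewrite xt.
Qed.

Lemma lower_size : size (flatten (map blk S)) =
  \sum_(v <- S) (if v \in I then size (sig v) else 1).
Proof.
rewrite size_flatten /shape sumnE !big_map; apply: eq_bigr => v _.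
by rewrite /blk; case: ifP => _; rewrite ?size_map.
Qed.

End Lower.
End Join.

Lemma split_mem (A : eqType) (x : A) (s : seq A) : x \in s -> exists p q, s = p ++ x :: q.
Proof. by case/splitPr => p q; exists p, q. Qed.

Section Upper.
Variables (T : finType) (e : rel T) (Tv : T -> finType) (ev : forall v, rel (Tv v)).
Hypotheses (Hsym : symmetric e) (eirr : irreflexive e).
Variable d : forall v, Tv v.
Local Notation K := {v : T & Tv v}.
Local Notation eH := (join_rel e ev).
Local Notation NH := (cnbhd eH).

Variable S' : seq K.
Hypothesis LS' : legal eH S'.

Lemma U' : uniq S'. Proof. by case/and3P: LS'. Qed.

Definition PN x := pnS eH S' x.
Definition bef (y x : K) := (y \in S') && (index y S' < index x S').

Lemma befP y x : (y \in take (index x S') S') = bef y x.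
Proof.
rewrite /bef; case: (boolP (y \in S')) => ys; first by rewrite in_take.
by apply/negbTE; apply: contra ys; apply: mem_take.
Qed.

Lemma befE p x s y : p ++ x :: s = S' -> bef y x = (y \in p).
Proof.
move=> E; rewrite -befP; have := @take_index_mid _ p s x; rewrite E => -> //.
exact: U'.
Qed.

Lemma mem_PN z x : z \in PN x -> z \in NH x /\ forall y, bef y x -> z \notin NH y.
Proof.
rewrite /PN pnSE in_setD mem_dom => /andP[/hasPn H zx]; split=> // y.
by rewrite -befP; apply: H.
Qed.

Lemma PN_intro z x : z \in NH x -> (forall y, bef y x -> z \notin NH y) -> z \in PN x.
Proof.
move=> zx H; rewrite /PN pnSE in_setD zx andbT mem_dom; apply/hasPn => y.
by rewrite befP; apply: H.
Qed.

Lemma PN_ne x : x \in S' -> exists z, z \in PN x.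
Proof.
move=> xS; have := LS'; case/and3P => _ _ /allP /(_ x xS) /set0Pn[z zP].
by exists z.
Qed.

Definition phi x : T :=
  if [exists z, (z \in PN x) && (tag z == tag x)] then tag x
  else if [pick z in PN x] is Some z then tag z else tag x.

Lemma phi1 x : x \in S' -> exists2 z, z \in PN x & tag z = phi x.
Proof.
move=> xS; rewrite /phi; case: existsP => [[z /andP[zP /eqP zt]]|_]; first by exists z.
case: pickP => [z zP|H]; first by exists z.
by exfalso; case: (PN_ne xS) => z zP; rewrite H in zP.
Qed.

Lemma phi2 x z : z \in PN x -> tag z = tag x -> phi x = tag x.
Proof.
move=> zP zt; rewrite /phi; case: existsP => // H; exfalso; apply: H.
by exists z; rewrite zP zt eqxx.
Qed.

Lemma bef_trans a b c : bef a b -> bef b c -> bef a c.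
Proof. by rewrite /bef => /andP[-> ab] /andP[_ bc]; apply: ltn_trans bc. Qed.

Lemma bef_S a b : bef a b -> a \in S'.
Proof. by case/andP. Qed.

Lemma bef_total a b : a \in S' -> b \in S' -> a != b -> bef a b \/ bef b a.
Proof.
move=> aS bS ab; rewrite /bef aS bS /=.
case: (ltngtP (index a S') (index b S')) => [|| E]; [by left|by right|].
by move: E => /(index_inj a aS bS) E; rewrite E eqxx in ab.
Qed.

Lemma L1 x z y : z \in PN x -> bef y x -> ~~ e (tag y) (tag z).
Proof.
move=> /mem_PN[_ H] /H; apply: contra => E; exact: NH_adj.
Qed.

Lemma Lstar y z w : z \in PN y -> bef w y -> tag w = tag z ->
  exists x0, [/\ bef x0 y, tag x0 = tag z & phi x0 = tag z].
Proof.
move=> zP wy wt; set u := tag z in wt *.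
pose P := fun a : K => tag a == u.
have wS : w \in S' by case/andP: wy.
have hP : has P S' by apply/hasP; exists w; rewrite // /P wt.
set i := find P S'; set x0 := nth w S' i.
have x0S : x0 \in S' by rewrite mem_nth // -has_find.
have Px0 : P x0 by apply: nth_find.
have ix0 : index x0 S' = i by rewrite index_uniq // ?U' // -has_find.
have iw : i <= index w S'.
  rewrite leqNgt; apply/negP => lt; have := before_find w lt.
  by rewrite nth_index // /P wt eqxx.
have bx0 : bef x0 y.
  by rewrite /bef x0S ix0; apply: leq_ltn_trans iw _; case/andP: wy.
exists x0; split => //; first by apply/eqP.
rewrite -(eqP Px0); apply: (phi2 (z:=x0)) => //; apply: PN_intro; first exact: cnbhd_refl.
move=> y' by'x0; apply/negP => /NH_tag; rewrite in_cnbhd => /orP[/eqP E|E].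
  have := by'x0; rewrite /bef ix0 => /andP[y'S lt].
  by have := before_find w lt; rewrite nth_index // /P -E (eqP Px0) eqxx.
move: E; rewrite (eqP Px0) /u => E; by have := L1 zP (bef_trans by'x0 bx0); rewrite E.
Qed.

Definition fc x := phi x \notin map phi (take (index x S') S').
Definition SG := map tag (filter fc S').

Lemma fc_bef x y : fc x -> bef y x -> phi y != phi x.
Proof.
move=> fx; rewrite -befP => yt; apply: contraNneq fx => <-; exact: map_f.
Qed.

Lemma bef_fc x : (forall y, bef y x -> phi y != phi x) -> fc x.
Proof.
move=> H; apply/mapP => -[y yt E]; rewrite befP in yt.
by have := H y yt; rewrite E eqxx.
Qed.

Lemma nd_SG : nd e set0 SG.
Proof.
have gen : forall s p, p ++ s = S' ->
    nd e (dom e (map tag (filter fc p))) (map tag (filter fc s)).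
  elim => [|x s IH] p E //=.
  have E' : (p ++ [:: x]) ++ s = S' by rewrite -catA.
  have IH' := IH _ E'.
  move: IH'; rewrite filter_cat /=; case fx: (fc x) => /= IH'; last by rewrite cats0 in IH'.
  rewrite map_cat dom_cat /= dom1 in IH'; rewrite IH' andbT.
  have xS : x \in S' by rewrite -E mem_cat inE eqxx orbT.
  have [z zP zt] := phi1 xS.
  apply/set0Pn; exists (phi x); rewrite in_setD; apply/andP; split; last first.
    by rewrite -zt; exact: (NH_tag (mem_PN zP).1).
  rewrite mem_dom; apply/hasPn => u /mapP[y]; rewrite mem_filter => /andP[_ yp] ->.
  have byx : bef y x by rewrite (befE _ E).
  rewrite in_cnbhd; apply/negP => /orP[/eqP Ey|Ey].
    have [x0 [bx0 _ px0]] := Lstar zP byx (etrans (esym Ey) (esym zt)).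
    by have := fc_bef fx bx0; rewrite px0 zt eqxx.
  by have := L1 zP byx; rewrite zt Ey.
by have := gen S' [::] erefl; rewrite /= dom0.
Qed.

Lemma first_phi t : t \in map phi S' ->
  exists x1, [/\ x1 \in S', phi x1 = t, fc x1 & forall y, bef y x1 -> phi y != t].
Proof.
move=> tin; pose P := fun a : K => phi a == t.
case/mapP: tin => x xS Et.
have hP : has P S' by apply/hasP; exists x; rewrite // /P Et.
set i := find P S'; set x1 := nth x S' i.
have x1S : x1 \in S' by rewrite mem_nth // -has_find.
have Px1 : P x1 by apply: nth_find.
have ix1 : index x1 S' = i by rewrite index_uniq // ?U' // -has_find.
have Hb : forall y, bef y x1 -> phi y != t.
  move=> y /andP[yS]; rewrite ix1 => lt; have := before_find x lt.
  by rewrite nth_index // /P => /negbT.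
exists x1; split => //; first exact/eqP.
by apply: bef_fc => y /Hb; rewrite (eqP Px1).
Qed.

Lemma card_img : #|[set t | t \in map phi S']| <= size SG.
Proof.
apply: (@leq_trans #|[set t | t \in map phi (filter fc S')]|).
  apply/subset_leq_card/subsetP => t; rewrite !inE => /first_phi[x1 [x1S <- fx1 _]].
  by apply: map_f; rewrite mem_filter fx1.
by rewrite cardsE /SG size_map -(size_map phi); apply: card_size.
Qed.


Lemma two_IS t a b : a \in S' -> b \in S' -> a != b -> phi a = t -> phi b = t ->
  t \in IS e SG.
Proof.
move=> aS bS ab pa pb.
have [x0 [x0S tx0 px0]] : exists x0, [/\ x0 \in S', tag x0 = t & phi x0 = t].
  wlog bab : a b aS bS ab pa pb / bef a b.
    move=> W; case: (bef_total aS bS ab) => H; first exact: (W a b).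
    by apply: (W b a) => //; rewrite eq_sym.
  have [zb zbP zbt] := phi1 bS; rewrite pb in zbt.
  case: (eqVneq (tag a) t) => [ta|nta].
    have [x0 [bx0 tx0 px0]] := Lstar zbP bab (etrans ta (esym zbt)).
    by exists x0; rewrite tx0 px0 zbt (bef_S bx0).
  have [za zaP zat] := phi1 aS; rewrite pa in zat.
  have := NH_tag (mem_PN zaP).1; rewrite in_cnbhd zat eq_sym (negbTE nta) /= => E.
  by have := L1 zbP bab; rewrite zbt E.
have tin : t \in map phi S' by rewrite -px0; exact: map_f.
have [x1 [x1S px1 fx1 minx1]] := first_phi tin.
have [z1 z1P z1t] := phi1 x1S; rewrite px1 in z1t.
have tx1 : tag x1 = t.
  case: (eqVneq (tag x1) t) => // ntx1; exfalso.
  have := NH_tag (mem_PN z1P).1; rewrite in_cnbhd z1t eq_sym (negbTE ntx1) /= => E.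
  have x10 : x1 != x0 by apply: contra_neq ntx1 => ->.
  case: (bef_total x1S x0S x10) => [b10|b01]; last by have := minx1 _ b01; rewrite px0 eqxx.
  have [z0 z0P z0t] := phi1 x0S; rewrite px0 in z0t.
  by have := L1 z0P b10; rewrite z0t E.
have [p [q E]] := split_mem x1S.
have SGE : SG = map tag (filter fc p) ++ t :: map tag (filter fc q).
  by rewrite /SG E filter_cat /= fx1 map_cat /= tx1.
have USG : uniq SG := nd_uniq nd_SG.
rewrite in_IS SGE take_index_mid; last by rewrite -SGE.
rewrite mem_cat inE eqxx orbT /=.
rewrite mem_dom; apply/hasPn => u /mapP[y]; rewrite mem_filter => /andP[_ yp] ->.
have byx : bef y x1 by rewrite (befE _ (esym E)).
rewrite in_cnbhd; apply/negP => /orP[/eqP Ey|Ey].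
  have [x0' [bx0' _ px0']] := Lstar z1P byx (etrans (esym Ey) (esym z1t)).
  by have := minx1 _ bx0'; rewrite px0' z1t eqxx.
by have := L1 z1P byx; rewrite z1t Ey.
Qed.

Definition proj t (x : K) : Tv t :=
  if tag x == t then tagged_as (Tagged Tv (d t)) x
  else odflt (d t) [pick y : Tv t | Tagged Tv y \in PN x].

Lemma proj_key t x : x \in S' -> phi x = t ->
  exists2 y, y \in cnbhd (@ev t) (proj t x) & Tagged Tv y \in PN x.
Proof.
move=> xS px; have [[u y] zP /= zt] := phi1 xS; rewrite px in zt; subst u.
rewrite /proj; case: eqP => [tx|ntx].
  move: zP; case: x xS px tx => [u y0] /= _ _ tu; subst u; rewrite tagged_asE => zP.
  by exists y => //; rewrite -(NH_same e); case: (mem_PN zP).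
case: pickP => [y' Hy'|H]; first by exists y' => //; apply: cnbhd_refl.
by have := H y; rewrite zP.
Qed.

Lemma nd_proj t : nd (@ev t) set0 (map (proj t) (filter (fun x => phi x == t) S')).
Proof.
have gen : forall s p, p ++ s = S' ->
    nd (@ev t) (dom (@ev t) (map (proj t) (filter (fun x => phi x == t) p)))
       (map (proj t) (filter (fun x => phi x == t) s)).
  elim => [|x s IH] p E //=.
  have E' : (p ++ [:: x]) ++ s = S' by rewrite -catA.
  have IH' := IH _ E'.
  move: IH'; rewrite filter_cat /=; case px: (phi x == t) => /= IH'; last by rewrite cats0 in IH'.
  rewrite map_cat dom_cat /= dom1 in IH'; rewrite IH' andbT.
  have xS : x \in S' by rewrite -E mem_cat inE eqxx orbT.
  have [y yN yP] := proj_key xS (eqP px).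
  apply/set0Pn; exists y; rewrite in_setD yN andbT mem_dom.
  apply/hasPn => u /mapP[a]; rewrite mem_filter => /andP[pa ap] ->.
  have bax : bef a x by rewrite (befE _ E).
  have [_ H] := mem_PN yP.
  case: (eqVneq (tag a) t) => [ta|nta].
    move: (H a bax); case: a ap pa bax ta => u0 ya /= _ _ _ tu; subst u0.
    by rewrite /proj /= eqxx tagged_asE NH_same.
  have aS := bef_S bax; have [za zaP zat] := phi1 aS; rewrite (eqP pa) in zat.
  have := NH_tag (mem_PN zaP).1; rewrite in_cnbhd zat eq_sym (negbTE nta) /= => Ea.
  by have := L1 yP bax; rewrite /= Ea.
by have := gen S' [::] erefl; rewrite /= dom0.
Qed.

Lemma count_le_gamma t : count (fun x => phi x == t) S' <= gamma_gr (@ev t).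
Proof.
have [s2 [L2 le2]] := ext (fun _ => 0) (nd_proj t).
rewrite !big1 // !addn0 size_map size_filter in le2.
exact: leq_trans le2 (legal_le_gamma L2).
Qed.

Lemma size_count (f : K -> T) (s : seq K) : size s = \sum_t count (fun x => f x == t) s.
Proof.
elim: s => [|x s IH] /=; first by rewrite big1.
rewrite big_split /= -IH -add1n; congr (_ + _).
rewrite (bigD1 (f x)) //= eqxx big1 // => t; rewrite eq_sym => /negbTE ->.
by [].
Qed.

Lemma upper : exists I, [/\ independent e I, LI_nonempty e I &
  size S' <= gamma_grI e I + \sum_(v in I) (gamma_gr (@ev v) - 1)].
Proof.
pose g v := gamma_gr (@ev v).
have step : size S' <= \sum_(v in IS e SG) (g v - 1) + size SG.
  rewrite (size_count phi).
  apply: (@leq_trans (\sum_t ((if t \in IS e SG then g t - 1 else 0)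
                               + (t \in map phi S')))).
    apply: leq_sum => t _; set c := count _ _.
    case: (posnP c) => [->//|cpos].
    have tin : t \in map phi S'.
      by move: cpos; rewrite -has_count => /hasP[x xS /eqP <-]; apply: map_f.
    rewrite tin; case: (leqP c 1) => [c1|c2]; first by apply: leq_trans c1 (leq_addl _ _).
    have : 2 <= size (filter (fun x => phi x == t) S') by rewrite size_filter.
    case E: (filter _ S') => [|a [|b r]] //= _.
    have aF : a \in filter (fun x => phi x == t) S' by rewrite E inE eqxx.
    have bF : b \in filter (fun x => phi x == t) S' by rewrite E !inE eqxx orbT.
    have ab : a != b.
      by have := filter_uniq (fun x => phi x == t) U'; rewrite E /= inE => /andP[/norP[]].
    move: aF bF; rewrite !mem_filter => /andP[/eqP pa aS] /andP[/eqP pb bS].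
    rewrite (two_IS aS bS ab pa pb).
    have := count_le_gamma t; rewrite -/c /g => H; lia.
  rewrite big_split /= -big_mkcond leq_add2l.
  apply: leq_trans card_img; rewrite -sum1_card [X in _ <= X]big_mkcond /=.
  by apply: leq_sum => t _; rewrite inE; case: (t \in _).
have [S2 [L2 le2]] := ext (fun v => g v - 1) nd_SG.
exists (IS e S2); split; [exact: IS_indep|exact: LI_of|].
apply: leq_trans step _; rewrite addnC; apply: leq_trans le2 _.
by rewrite leq_add2r; apply: legalI_le.
Qed.

End Upper.

Import Order.TTheory GRing.Theory Num.Theory.
Local Open Scope ring_scope.

Theorem theorem1 (T : finType) (e : rel T) (Tv : T -> finType)
  (ev : forall v, rel (Tv v))
  (esym : symmetric e) (eirr : irreflexive e)
  (evsym : forall v, symmetric (ev v)) (evirr : forall v, irreflexive (ev v))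
  (Tv_ne : forall v, (0 < #|Tv v|)%N) :
  let val (I : {set T}) : int :=
    (gamma_grI e I)%:Z + \sum_(v in I) (gamma_gr (ev v))%:Z - (#|I|)%:Z in
  (exists I : {set T}, [/\ independent e I, LI_nonempty e I &
       (gamma_gr (join_rel e ev))%:Z = val I]) /\
  (forall I : {set T}, independent e I -> LI_nonempty e I ->
       val I <= (gamma_gr (join_rel e ev))%:Z).
Proof.
move=> val.
have d : forall v, Tv v.
  move=> v; have := Tv_ne v; case: (pickP (Tv v)) => [x _ _|H]; first exact: x.
  by rewrite (eq_card0 H).
pose g v := gamma_gr (ev v).
have gpos v : (0 < g v)%N := gamma_pos (ev v) (Tv_ne v).
have valE I : val I = (gamma_grI e I + \sum_(v in I) (g v - 1))%N%:Z.
  have HS : (\sum_(v in I) g v = \sum_(v in I) (g v - 1) + #|I|)%N.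
    by rewrite -sum1_card -big_split; apply: eq_bigr => v _ /=; rewrite subnK.
  rewrite /val -(big_morph Posz PoszD (erefl 0%:Z)) -/g HS PoszD PoszD.
  by rewrite addrA addrK.
have part2 : forall I : {set T}, independent e I -> LI_nonempty e I ->
    val I <= (gamma_grI e I + \sum_(v in I) (g v - 1))%N%:Z /\
    (gamma_grI e I + \sum_(v in I) (g v - 1) <= gamma_gr (join_rel e ev))%N.
  move=> I _ LI; split; first by rewrite valE.
  have [S [LS IE szS]] := gammaI_attained LI.
  have ex v : exists s, legal (ev v) s && (size s == g v).
    by have [s [Ls szs]] := gamma_attained (ev v); exists s; rewrite Ls szs eqxx.
  pose sig v := xchoose (ex v).
  have Lsig v : legal (ev v) (sig v) by have /andP[] := xchooseP (ex v).
  have szsig v : size (sig v) = g v by have /andP[_ /eqP] := xchooseP (ex v).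
  have IE' : I = IS e S by [].
  have LS' : legal (join_rel e ev) (flatten [seq blk d I sig i | i <- S]).
    by rewrite legal_nd (lower_nd eirr d LS IE' Lsig) (lower_dom eirr d LS IE' Lsig).
  apply: leq_trans (legal_le_gamma LS'); rewrite lower_size -szS.
  rewrite [X in (_ <= X)%N](eq_bigr (fun v => 1 + (if v \in I then g v - 1 else 0)))%N; last first.
    by move=> v _; case: ifP => _ //; rewrite szsig /=; have := gpos v; lia.
  rewrite big_split /= sum1_size leq_add2l.
  have US : uniq S by case/and3P: LS.
  rewrite big_uniq // [X in (X <= _)%N]big_mkcond [X in (_ <= X)%N]big_mkcond /=.
  apply: leq_sum => v _; case vI: (v \in I); case: ifP => //.
  by rewrite IE' in_IS in vI; case/andP: vI => ->.
split; last first.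
  by move=> I iI LI; have [H1 H2] := part2 I iI LI; apply: le_trans H1 _; rewrite lez_nat.
have [Sm [Lm szm]] := gamma_attained (join_rel e ev).
have [I [iI LI le]] := upper esym eirr d Lm.
exists I; split => //.
have [H1 H2] := part2 I iI LI.
rewrite valE; apply/eqP; rewrite eqz_nat eqn_leq H2 -szm andbT.
exact: le.
Qed.
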